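(* Let $\chi\geq 3$ and $m\geq \vec{R}(\chi)$ be integers, and let $H=H(TT_\chi,m)$. Then for every integer $n\ge 3$, $R(P^{(3)}_{n,2},H)\geq \left(\frac23 n-3\right)(\vec{R}(\chi)-1)+1$; in particular $R(P^{(3)}_{n,2},H)\geq (1+o(1))\frac23(\vec{R}(\chi)-1)n$ as $n\to\infty$.
   Context: $TT_\chi$ denotes the transitive tournament on $[\chi]$. For a tournament $T_\chi$ on $[\chi]$ and $m\ge1$, $H(T_\chi,m)$ is the $3$-uniform hypergraph whose vertex set is partitioned into sets $A_1,\dots,A_\chi$ each of size $m$, with edge set $\{xyz: x,y\in A_i,\ z\in A_j,\ (i,j)\text{ an arc of }T_\chi\}$. $\vec{R}(\ell)$ is the least $N$ such that every tournament on at least $N$ vertices contains a copy of $TT_\ell$. $R(G,H)$ is the least $N$ such that every red/blue colouring of the edges of $K^{(3)}_N$ contains a red copy of $G$ or a blue copy of $H$. The tight path $P^{(3)}_{n,2}$ has vertices $v_1,\dots,v_n$ and edges $\{v_i,v_{i+1},v_{i+2}\}$, $i\in[n-2]$. *)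

(* Defs.v *)
From mathcomp Require Import all_boot all_order all_algebra.
Set Implicit Arguments. Unset Strict Implicit. Unset Printing Implicit Defensive.

Definition is_tournament (V : finType) (T : rel V) : Prop :=
  (forall x, ~~ T x x) /\ (forall x y, x != y -> T x y != T y x).

Definition contains_TT (V : finType) (T : rel V) (l : nat) : Prop :=
  exists f : 'I_l -> V, injective f /\ (forall i j : 'I_l, i < j -> T (f i) (f j)).

Definition tourn_arrow (l N : nat) : Prop :=
  forall k, N <= k -> forall T : rel 'I_k, is_tournament T -> contains_TT T l.

Definition is_tourn_ramsey (l r : nat) : Prop :=
  tourn_arrow l r /\ (forall N, tourn_arrow l N -> r <= N).

(* A copy of (V,E) in colour b under c : {set 'I_N} -> bool
   (c e = true means the triple e is red, false means blue). *)
Definition mono_copy (N : nat) (c : {set 'I_N} -> bool) (b : bool)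
  (V : finType) (E : {set {set V}}) : Prop :=
  exists f : V -> 'I_N, injective f /\ (forall e, e \in E -> c (f @: e) = b).

(* Tight path P^{(3)}_{n,2} on vertices 0..n-1 (v_{i+1} = i),
   edges {i, i+1, i+2} for i + 2 < n. *)
Definition tight_path_edges (n : nat) : {set {set 'I_n}} :=
  [set e : {set 'I_n} | [exists i : 'I_n,
     (i.+2 < n) && (e == [set x : 'I_n | (i <= x) && (x <= i.+2)])]].

(* H(T_chi, m): vertex set 'I_chi * 'I_m, A_i = {i} * 'I_m,
   edges xyz with x,y in A_i (x != y), z in A_j, (i,j) an arc of T. *)
Definition Hedges (chi m : nat) (T : rel 'I_chi) : {set {set ('I_chi * 'I_m)}} :=
  [set e : {set ('I_chi * 'I_m)} | [exists x, exists y, exists z,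
     [&& x.1 == y.1, x != y, T x.1 z.1 & e == [set x; y; z]]]].

Definition TT (chi : nat) : rel 'I_chi := fun i j => i < j.

Definition ramsey_arrow_path_H (n chi m N : nat) : Prop :=
  forall c : {set 'I_N} -> bool,
    mono_copy c true (tight_path_edges n) \/ mono_copy c false (@Hedges chi m (@TT chi)).

(* Main.v *)
Require Import Defs.
From mathcomp Require Import all_boot all_order all_algebra.
From mathcomp Require Import zify ring lra.
From Stdlib Require Import Classical.
Import GRing.Theory Num.Theory.
Set Implicit Arguments. Unset Strict Implicit. Unset Printing Implicit Defensive.
Definition red_col N K (T : rel 'I_K) (p : 'I_N -> 'I_K) (e : {set 'I_N}) : bool :=
  [exists u in e, exists v in e, (u != v) && (p u == p v) && [forall w in e, ~~ T (p u) (p w)]].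

Lemma red3 N K (T : rel 'I_K) (p : 'I_N -> 'I_K) (A B C : 'I_N) :
  red_col T p [set A; B; C] ->
  exists u v : 'I_N, [/\ u \in [:: A; B; C], v \in [:: A; B; C], u != v, p u = p v &
     [/\ ~~ T (p u) (p A), ~~ T (p u) (p B) & ~~ T (p u) (p C)]].
Proof.
case/existsP=> u /andP[Hu /existsP[v /andP[Hv /andP[/andP[Huv /eqP Hp] /forallP Hw]]]].
exists u, v; split => //.
- by move: Hu; rewrite !inE -orbA.
- by move: Hv; rewrite !inE -orbA.
- split.
  + by have := Hw A; rewrite !inE eqxx.
  + by have := Hw B; rewrite !inE eqxx orbT.
  + by have := Hw C; rewrite !inE eqxx !orbT.
Qed.

Lemma no_blue_H chi m N K (T : rel 'I_K) (p : 'I_N -> 'I_K) :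
  is_tournament T -> ~ contains_TT T chi -> K < m ->
  ~ mono_copy (red_col T p) false (@Hedges chi m (@TT chi)).
Proof.
move=> [Tirr Ttot] noTT ltKm [f [finj Hf]].
have pig : forall i : 'I_chi, exists xy : 'I_m * 'I_m,
    (xy.1 != xy.2) && (p (f (i, xy.1)) == p (f (i, xy.2))).
  move=> i; apply/existsP; apply: contraT => /existsPn H.
  have : injective (fun x : 'I_m => p (f (i, x))).
    move=> x y /eqP Exy; apply/eqP/negPn/negP => nxy.
    by have := H (x, y); rewrite /= nxy Exy.
  by move/leq_card; rewrite !card_ord; rewrite leqNgt ltKm.
have [h Hh] := fin_all_exists pig.
pose g i := p (f (i, (h i).1)).
have key : forall i j : 'I_chi, i < j -> T (g i) (g j).
  move=> i j ltij.
  have /andP[ne /eqP eqp] := Hh i.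
  have He : [set (i, (h i).1); (i, (h i).2); (j, (h j).1)] \in Hedges m (@TT chi).
    rewrite inE; apply/existsP; exists (i, (h i).1); apply/existsP; exists (i, (h i).2).
    apply/existsP; exists (j, (h j).1); rewrite /TT /= !eqxx ltij.
    by rewrite /= xpair_eqE eqxx /= ne.
  have := Hf _ He; rewrite ?(imsetU1, imsetU, imset_set1) => /negbT /existsPn /(_ (f (i, (h i).1))).
  rewrite !inE eqxx /= => /existsPn /(_ (f (i, (h i).2))).
  rewrite !inE eqxx orbT /= (inj_eq finj) xpair_eqE eqxx ne eqp eqxx /=.
  move/forallPn => [w]; rewrite negb_imply negbK !inE -orbA => /andP[Hw Tw].
  case/or3P: Hw => /eqP Ew; rewrite Ew -?eqp in Tw.
  - by move: Tw; rewrite (negbTE (Tirr _)).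
  - by move: Tw; rewrite (negbTE (Tirr _)).
  - exact: Tw.
apply: noTT; exists g; split; last exact: key.
move=> i j Eg; apply/eqP/negPn/negP => nij.
case: (ltngtP i j) => [lt|lt|/val_inj E]; last by rewrite E eqxx in nij.
- by have := key _ _ lt; rewrite Eg (negbTE (Tirr _)).
- by have := key _ _ lt; rewrite Eg (negbTE (Tirr _)).
Qed.
Definition ok2 (X : eqType) (a x y z : X) :=
  ((x == a) && (y == a)) || ((x == a) && (z == a)) || ((y == a) && (z == a)).
Definition noout (X : eqType) (T : rel X) (a x y z : X) := [&& ~~ T a x, ~~ T a y & ~~ T a z].

Lemma ok2_count (X : eqType) (a x y z : X) : ok2 a x y z -> 2 <= (x == a) + (y == a) + (z == a).
Proof. by rewrite /ok2; case: (x == a); case: (y == a); case: (z == a). Qed.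

Lemma const_win K (T : rel 'I_K) (a b x y z w : 'I_K) :
  is_tournament T -> ok2 a x y z -> noout T a x y z -> ok2 b y z w -> noout T b y z w -> a = b.
Proof.
move=> [Tirr Ttot] Ha Na Hb Nb; apply/eqP; apply: contraT => nab.
have ya : (y == a) || (z == a).
  by move: Ha; rewrite /ok2; case: (x == a); case: (y == a); case: (z == a).
have yb : (y == b) || (z == b).
  by move: Hb; rewrite /ok2; case: (w == b); case: (y == b); case: (z == b).
have nba : ~~ T b a.
  by move: Nb ya; rewrite /noout => /and3P[N1 N2 N3] /orP[] /eqP <-.
have nab' : ~~ T a b.
  by move: Na yb; rewrite /noout => /and3P[N1 N2 N3] /orP[] /eqP <-.
by have := Ttot a b nab; rewrite (negbTE nba) (negbTE nab').
Qed.

Lemma window n N K (T : rel 'I_K) (p : 'I_N -> 'I_K) (f : 'I_n.+1 -> 'I_N) :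
  injective f ->
  (forall e, e \in tight_path_edges n.+1 -> red_col T p (f @: e) = true) ->
  forall t, t.+2 < n.+1 ->
  exists a, ok2 a (p (f (inord t))) (p (f (inord t.+1))) (p (f (inord t.+2))) &&
            noout T a (p (f (inord t))) (p (f (inord t.+1))) (p (f (inord t.+2))).
Proof.
move=> finj Hf t ht.
have Ee : [set x : 'I_n.+1 | ((inord t : 'I_n.+1) <= x) && (x <= (inord t : 'I_n.+1).+2)] =
          [set inord t; inord t.+1; inord t.+2].
  apply/setP => x; rewrite !inE -!val_eqE /= !inordK; lia.
have He : [set inord t; inord t.+1; inord t.+2] \in tight_path_edges n.+1.
  rewrite inE; apply/existsP; exists (inord t); rewrite -Ee eqxx andbT inordK //; lia.
have := Hf _ He; rewrite ?(imsetU1, imsetU, imset_set1) => /red3 [u [v [Hu Hv Huv Hp [N1 N2 N3]]]].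
exists (p u); apply/andP; split; last by rewrite /noout N1 N2 N3.
move: Hu Hv Huv Hp; rewrite !inE => /or3P[] /eqP -> /or3P[] /eqP -> //;
  rewrite ?eqxx // => _ ->; rewrite /ok2 !eqxx ?orbT //.
Qed.

Lemma no_red_path n N K (T : rel 'I_K) (p : 'I_N -> 'I_K) s :
  is_tournament T -> (forall a, #|[set x | p x == a]| <= s) -> 3 * s + 5 <= 2 * n -> 3 <= n ->
  ~ mono_copy (red_col T p) true (tight_path_edges n).
Proof.
move=> Ttour Hfib Hs Hn.
case: n Hs Hn => [|n] Hs Hn //.
move=> [f [finj Hf]].
pose q t := p (f (inord t)).
have W := window finj Hf.
have [a Ha0] := W 0 Hn.
have Wa : forall t, t.+2 < n.+1 -> ok2 a (q t) (q t.+1) (q t.+2) && noout T a (q t) (q t.+1) (q t.+2).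
  elim=> [//|t IH] ht.
  have [b Hb] := W _ ht.
  have /andP[O1 N1] := IH (ltnW ht).
  have /andP[O2 N2] := Hb.
  by rewrite (const_win Ttour O1 N1 O2 N2).
have cnt : forall j, 3 * j <= n.+1 -> 2 * j <= \sum_(0 <= t < 3 * j) (q t == a).
  elim=> [|j IH] hj; first by rewrite muln0.
  have e3 : 3 * j.+1 = (3 * j).+3 by rewrite mulnS.
  rewrite e3 !big_nat_recr //=.
  have := IH ltac:(lia).
  have /andP[O _] := Wa (3 * j) ltac:(lia).
  have := ok2_count O; lia.
have c1 := cnt (n.+1 %/ 3) ltac:(lia).
have c2 : \sum_(0 <= t < 3 * (n.+1 %/ 3)) (q t == a) <= \sum_(0 <= t < n.+1) (q t == a).
  rewrite [X in _ <= X](@big_cat_nat _ _ _ (3 * (n.+1 %/ 3))) //=; last lia.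
  exact: leq_addr.
have c3 : \sum_(0 <= t < n.+1) (q t == a) = #|[set t : 'I_n.+1 | p (f t) == a]|.
  rewrite big_mkord -sum1dep_card [RHS]big_mkcond /=; apply: eq_bigr => t _.
  by rewrite /q inord_val; case: (p (f t) == a).
have c4 : #|[set t : 'I_n.+1 | p (f t) == a]| <= #|[set x | p x == a]|.
  rewrite -(card_imset _ finj); apply: subset_leq_card.
  by apply/subsetP => x /imsetP[t]; rewrite !inE => H ->.
have := Hfib a; lia.
Qed.
Lemma part_fun N K s : N <= s * K.+1 ->
  exists p : 'I_N -> 'I_K.+1, forall a, #|[set x | p x == a]| <= s.
Proof.
move=> HN; exists (fun x : 'I_N => inord (x %/ s)) => a.
case: s HN => [|s] HN.
  apply: leq_trans (max_card _) _; rewrite card_ord; lia.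
have Hc := @leq_card_in _ _ (fun x : 'I_N => (inord (x %% s.+1) : 'I_s.+1)) [set x : 'I_N | inord (x %/ s.+1) == a].
rewrite card_ord in Hc; apply: Hc.
move=> x y; rewrite !inE => /eqP Hx /eqP Hy Exy.
have bx : x %/ s.+1 < K.+1 by rewrite ltn_divLR //; have := ltn_ord x; lia.
have by_ : y %/ s.+1 < K.+1 by rewrite ltn_divLR //; have := ltn_ord y; lia.
have Ed : x %/ s.+1 = y %/ s.+1.
  by have := congr1 val (etrans Hx (esym Hy)); rewrite /= !inordK.
have Em : x %% s.+1 = y %% s.+1.
  by have := congr1 val Exy; rewrite /= !inordK // ltn_mod.
by apply: val_inj; rewrite /= (divn_eq x s.+1) (divn_eq y s.+1) Ed Em.
Qed.

Lemma arith n N r : 3 <= n -> 3 * N + 9 * r.+2 < 2 * n * r.+2 + 3 -> N <= ((2 * n - 5) %/ 3) * r.+2.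
Proof. move=> Hn H. nia. Qed.

Theorem proposition1p15 (chi m r n : nat) :
  3 <= chi -> is_tourn_ramsey chi r -> r <= m -> 3 <= n ->
  forall N : nat, ramsey_arrow_path_H n chi m N ->
    ((2%:R / 3%:R * n%:R - 3%:R) * (r%:R - 1) + 1 <= (N%:R : rat))%R.
Proof.
move=> Hchi [Harr Hmin] Hrm Hn N HN.
have Hcr : chi <= r.
  have Ttour : is_tournament (fun i j : 'I_r => i < j).
    split=> [x|x y nxy]; first by rewrite ltnn.
    case: (ltngtP x y) => // E; by rewrite (val_inj E) eqxx in nxy.
  have [g [ginj _]] := Harr r (leqnn r) _ Ttour.
  by have := leq_card _ ginj; rewrite !card_ord.
case: r Hcr Harr Hmin Hrm => [|[|[|r']]] Hcr Harr Hmin Hrm; try lia.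
have Hnot : ~ tourn_arrow chi r'.+2.
  move/Hmin; lia.
have [k [Hk [T [Ttour noTT]]]] : exists k (Hk : r'.+2 <= k) (T : rel 'I_k),
    is_tournament T /\ ~ contains_TT T chi.
  apply: NNPP => H; apply: Hnot => k Hk T HT; apply: NNPP => Hc; apply: H.
  by exists k, Hk, T.
pose T' : rel 'I_r'.+2 := fun i j => T (widen_ord Hk i) (widen_ord Hk j).
have T'tour : is_tournament T'.
  case: Ttour => Tirr Ttot; split=> [x|x y nxy]; first exact: Tirr.
  apply: Ttot; apply: contra nxy => /eqP E; apply/eqP/val_inj.
  by have := congr1 val E.
have noTT' : ~ contains_TT T' chi.
  move=> [g [ginj Hg]]; apply: noTT; exists (fun i => widen_ord Hk (g i)); split => //.
  move=> i j E; apply: ginj; apply: val_inj; exact: (congr1 val E).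
suff Hnat : 2 * n * r'.+2 + 3 <= 3 * N + 9 * r'.+2.
  have Hq : ((2 * n * r'.+2 + 3)%:R <= (3 * N + 9 * r'.+2)%:R :> rat)%R by rewrite ler_nat.
  move: Hq; rewrite -[r'.+3]addn3 -[r'.+2]addn2 !natrD !natrM.
  move=> Hq; nra.
rewrite leqNgt; apply/negP => Hlt.
have HNs := arith Hn Hlt.
have [p Hp] := part_fun HNs.
case: (HN (red_col T' p)).
- apply: (no_red_path T'tour Hp) => //; lia.
- exact: (@no_blue_H chi m N r'.+2 T' p T'tour noTT' ltac:(lia)).
Qed.
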